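(* Let $n\ge 5$. If $x\in\mathrm{Sort}_n(123,321)$, then $\mathrm{ind}_x(n)<\min(\mathrm{ind}_x(1),\mathrm{ind}_x(2))$, i.e. $n$ appears to the left of both $1$ and $2$ in $x$.
   Context: $\mathrm{ind}_x(a)$ is the position of the value $a$ in $x$. A permutation contains a pattern $p$ if it has a subsequence order-isomorphic to $p$; otherwise it avoids $p$. For a set $T$ of patterns, the map $s_T$ is defined as follows: the entries of the input permutation are read from left to right, with an initially empty stack. At each step, if the input is nonempty and pushing the next input entry onto the stack produces a stack whose contents, read from top to bottom, avoid every pattern in $T$, that entry is pushed; otherwise the top entry of the stack is popped and appended to the output. When the input is exhausted, the remaining stack entries are popped one at a time to the output. Write $s_{\sigma,\tau}=s_{\{\sigma,\tau\}}$ and $s=s_{\{21\}}$ (West's stack-sorting map). $\mathrm{Sort}_n(\sigma,\tau)$ is the set of $x\in S_n$ with $s(s_{\sigma,\tau}(x))=12\cdots n$. *)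

(* Defs.v *)
(* Permutations of [n] are represented as sequences of
   naturals that are permutations of [:: 1; ...; n]. *)
From mathcomp Require Import all_boot.
Set Implicit Arguments. Unset Strict Implicit. Unset Printing Implicit Defensive.

Definition order_iso (s p : seq nat) : bool :=
  (size s == size p) &&
  all (fun i => all (fun j =>
     (nth 0 s i < nth 0 s j) == (nth 0 p i < nth 0 p j))
     (iota 0 (size p))) (iota 0 (size p)).

Fixpoint subseqs (w : seq nat) : seq (seq nat) :=
  match w with
  | [::] => [:: [::]]
  | x :: w' => [seq x :: s | s <- subseqs w'] ++ subseqs w'
  end.

Definition contains (w p : seq nat) : bool := has (order_iso ^~ p) (subseqs w).

Definition avoids_all (T : seq (seq nat)) (w : seq nat) : bool :=
  all (fun p => ~~ contains w p) T.

(* The stack is a list read from top to bottom. *)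
Fixpoint push_step (T : seq (seq nat)) (a : nat) (stk out : seq nat)
  : seq nat * seq nat :=
  if avoids_all T (a :: stk) then (a :: stk, out) else
  match stk with
  | [::] => ([:: a], out) (* unreachable when all patterns have length >= 2 *)
  | b :: stk' => push_step T a stk' (rcons out b)
  end.

Fixpoint stack_run (T : seq (seq nat)) (inp stk out : seq nat) : seq nat :=
  match inp with
  | [::] => out ++ stk
  | a :: inp' =>
      let '(stk', out') := push_step T a stk out in stack_run T inp' stk' out'
  end.

Definition sT (T : seq (seq nat)) (x : seq nat) : seq nat := stack_run T x [::] [::].

Definition s_pair (sigma tau : seq nat) := sT [:: sigma; tau].

Definition west_s := sT [:: [:: 2; 1]].

Definition is_perm (n : nat) (x : seq nat) : bool := perm_eq x (iota 1 n).

Definition in_Sort (n : nat) (sigma tau : seq nat) (x : seq nat) : Prop :=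
  is_perm n x /\ west_s (s_pair sigma tau x) = iota 1 n.

(* ind_x(a): position of a in x (0-based; only comparisons are used) *)
Definition ind (x : seq nat) (a : nat) : nat := index a x.

Example west_ex : west_s [:: 3; 1; 2] = [:: 1; 2; 3]. Proof. vm_compute. reflexivity. Qed.
Example west_ex2 : west_s [:: 2; 3; 1] = [:: 2; 1; 3]. Proof. vm_compute. reflexivity. Qed.
Example sp_ex : s_pair [:: 1; 2; 3] [:: 3; 2; 1] [:: 1; 2; 3; 4] = [:: 2; 3; 4; 1].
Proof. vm_compute. reflexivity. Qed.

(* Main.v *)
Require Import Defs.
From mathcomp Require Import all_boot.
From mathcomp Require Import zify.
Set Implicit Arguments. Unset Strict Implicit. Unset Printing Implicit Defensive.

Lemma subseqs_in (w s : seq nat) : subseq s w -> s \in subseqs w.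
Proof.
elim: w s => [|x w IH] [|y s] //=.
- move=> _. rewrite mem_cat; apply/orP; right; apply: IH; exact: sub0seq.
- case: eqP => [->|_] H; rewrite mem_cat; apply/orP.
  + left; apply/mapP; exists s => //; exact: IH.
  + right; exact: IH.
Qed.

Lemma contains_sub w s p : subseq s w -> order_iso s p -> contains w p.
Proof. move=> Hs Hp; apply/hasP; exists s => //; exact: subseqs_in. Qed.

Lemma contains_subseq w w' p : subseq w w' -> contains w p -> contains w' p.
Proof.
move=> Hw /hasP [s Hs Hp]; apply: (contains_sub _ Hp).
apply: subseq_trans Hw.
clear Hp; elim: w s Hs => [|x w IH] s /=; first by rewrite inE => /eqP ->.
rewrite mem_cat => /orP [/mapP [s' Hs' ->]|Hs].
- rewrite /= eqxx; exact: IH.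
- apply: subseq_trans (IH _ Hs) (subseq_cons _ _).
Qed.

Lemma avoids_sub T w w' : subseq w w' -> avoids_all T w' -> avoids_all T w.
Proof.
move=> Hw /allP H; apply/allP => p Hp; apply/negP => Hc.
by move: (H p Hp); rewrite (contains_subseq Hw Hc).
Qed.

Fixpoint run T (inp stk out : seq nat) : seq nat * seq nat :=
  match inp with
  | [::] => (stk, out)
  | a :: inp' => let '(s', o') := push_step T a stk out in run T inp' s' o'
  end.

Lemma stack_run_run T inp stk out :
  stack_run T inp stk out = (run T inp stk out).2 ++ (run T inp stk out).1.
Proof.
elim: inp stk out => [|a inp IH] stk out //=.
by case: push_step => s' o'.
Qed.

Lemma run_cat T u v stk out :
  run T (u ++ v) stk out = run T v (run T u stk out).1 (run T u stk out).2.
Proof.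
elim: u stk out => [|a u IH] stk out //=.
by case: push_step => s' o'.
Qed.

Lemma run_cons T a inp stk out :
  run T (a :: inp) stk out =
  run T inp (push_step T a stk out).1 (push_step T a stk out).2.
Proof. by rewrite /=; case: push_step. Qed.

Lemma PS1 T a stk out : exists P R, [/\ stk = P ++ R,
  push_step T a stk out = (a :: R, out ++ P) &
  avoids_all T (a :: R) \/ R = [::]].
Proof.
elim: stk out => [|b stk IH] out /=.
- exists [::], [::]; split; [by []| by case: ifP; rewrite cats0 | by right].
- case: ifP => Hav.
  + by exists [::], (b :: stk); rewrite cats0; split => //; left.
  + have [P [R [E1 E2 E3]]] := IH (rcons out b).
    exists (b :: P), R; split => //; first by rewrite E1.
    by rewrite E2 -cats1 -catA.
Qed.

Lemma PS_suf T a P0 U out : avoids_all T (a :: U) ->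
  exists P1 P2, [/\ P0 = P1 ++ P2,
    push_step T a (P0 ++ U) out = (a :: P2 ++ U, out ++ P1) &
    avoids_all T (a :: P2 ++ U)].
Proof.
move=> HU; elim: P0 out => [|b P0 IH] out /=.
- exists [::], [::]; rewrite !cats0; split => //.
  by case: U HU => [|c U] /= ->.
- case: ifP => Hav.
  + by exists [::], (b :: P0); rewrite !cats0.
  + have [P1 [P2 [E1 E2 E3]]] := IH (rcons out b).
    exists (b :: P1), P2; split => //; first by rewrite E1.
    by rewrite E2 -cats1 -catA.
Qed.

Lemma run_perm T inp stk out :
  perm_eq ((run T inp stk out).2 ++ (run T inp stk out).1) (out ++ stk ++ inp)
  /\ exists Z, (run T inp stk out).2 = out ++ Z.
Proof.
elim: inp stk out => [|a inp IH] stk out /=.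
- by split; [rewrite cats0 | exists [::]; rewrite cats0].
- have [P [R [E1 E2 _]]] := PS1 T a stk out.
  rewrite E2; have [H1 [Z HZ]] := IH (a :: R) (out ++ P).
  split.
  + apply: (perm_trans H1); rewrite E1; apply/permP => p; rewrite !count_cat /=; lia.
  + by exists (P ++ Z); rewrite HZ catA.
Qed.

Lemma run_subseq T inp stk out :
  subseq (out ++ stk) ((run T inp stk out).2 ++ (run T inp stk out).1).
Proof.
elim: inp stk out => [|a inp IH] stk out /=; first exact: subseq_refl.
have [P [R [E1 E2 _]]] := PS1 T a stk out.
rewrite E2; apply: subseq_trans (IH _ _).
by rewrite E1 -!catA cat_subseq // cat_subseq // subseq_cons.
Qed.

Lemma run_suf T inp P0 U out : (forall c, c \in inp -> avoids_all T (c :: U)) ->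
  exists P Z, run T inp (P0 ++ U) out = (P ++ U, out ++ Z).
Proof.
elim: inp P0 out => [|a inp IH] P0 out H /=.
- by exists P0, [::]; rewrite cats0.
- have [P1 [P2 [E1 E2 _]]] := PS_suf P0 out (H a (mem_head _ _)).
  rewrite E2 -cat_cons.
  have H' : forall c, c \in inp -> avoids_all T (c :: U) by move=> c Hc; apply: H; rewrite inE Hc orbT.
  have [P [Z E]] := IH (a :: P2) (out ++ P1) H'.
  by exists P, (P1 ++ Z); rewrite E catA.
Qed.

Lemma subseq_split (x : nat) s y : subseq (x :: s) y ->
  exists y1 y2, y = y1 ++ x :: y2 /\ subseq s y2.
Proof.
elim: y => [|z y IH] //=.
case: eqP => [->|_] H.
- by exists [::], y.
- have [y1 [y2 [E H2]]] := IH H.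
  by exists (z :: y1), y2; rewrite E.
Qed.

Definition has231 (y : seq nat) :=
  exists a b c, [/\ a < b, b < c & subseq [:: b; c; a] y].

Lemma west_231 y k : uniq y -> west_s y = iota 1 k -> ~ has231 y.
Proof.
move=> Uy Hw [a [b [c [Hab Hbc Hs]]]].
have [y1 [y2 [Ey Hs2]]] := subseq_split Hs.
have [y3 [y4 [Ey2 Hs4]]] := subseq_split Hs2.
have Ha : a \in y4 by rewrite -sub1seq.
move: Hw Uy; rewrite Ey Ey2 -cat_cons catA /west_s /sT stack_run_run run_cat.
set y1' := y1 ++ b :: y3.
have Hb : b \in y1' by rewrite mem_cat mem_head orbT.
move=> Hw Uy.
have [Hp1 _] := run_perm [:: [:: 2; 1]] y1' [::] [::].
set s1 := (run _ y1' [::] [::]).1 in Hw Hp1.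
set o1 := (run _ y1' [::] [::]).2 in Hw Hp1.
rewrite /= in Hp1.
have [P [R [E1 E2 E3]]] := PS1 [:: [:: 2; 1]] c s1 o1.
rewrite run_cons E2 /= in Hw.
have HbR : b \notin R.
  apply/negP => HbR; case: E3 => [Hav|HR]; last by rewrite HR in HbR.
  have : contains (c :: R) [:: 2; 1].
    apply: (contains_sub (s := [:: c; b])).
    by rewrite /= eqxx sub1seq.
    by rewrite /order_iso /=; apply/andP; split => //; lia.
  by move: Hav; rewrite /avoids_all /= andbT => /negPf ->.
have Hb' : b \in o1 ++ P.
  have : b \in o1 ++ s1 by rewrite (perm_mem Hp1).
  by rewrite E1 catA mem_cat (negPf HbR) orbF.
have [Hp2 [Z HZ]] := run_perm [:: [:: 2; 1]] y4 (c :: R) (o1 ++ P).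
rewrite HZ -catA in Hw Hp2.
set fs := (run _ y4 _ _).1 in Hw Hp2.
have Hu : uniq (y1' ++ c :: y4) by [].
have Ha' : a \notin o1 ++ P.
  apply/negP => Ha'.
  have : a \in y1'.
    by rewrite -(perm_mem Hp1) E1 catA mem_cat Ha'.
  move=> Ha1; move: Hu; rewrite cat_uniq => /and3P [_ /hasPn H _].
  by move: (H a); rewrite inE Ha orbT => /(_ isT); rewrite Ha1.
have Hak : a \in iota 1 k.
  rewrite -Hw mem_cat; apply/orP; right.
  have : a \in (o1 ++ P) ++ Z ++ fs.
    by rewrite (perm_mem Hp2) !mem_cat !inE Ha !orbT.
  by rewrite mem_cat (negPf Ha').
have Hbk : b \in iota 1 k by rewrite -Hw mem_cat Hb'.
have Hia : index a (iota 1 k) >= size (o1 ++ P).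
  rewrite -Hw index_cat (negPf Ha'); exact: leq_addr.
have Hib : index b (iota 1 k) < size (o1 ++ P).
  by rewrite -Hw index_cat Hb' index_mem.
have := nth_index 0 Hak; have := nth_index 0 Hbk.
have Ha2 : index a (iota 1 k) < k by rewrite -{2}(size_iota 1 k) index_mem.
have Hb2 : index b (iota 1 k) < k by rewrite -{2}(size_iota 1 k) index_mem.
rewrite !nth_iota //; lia.
Qed.


Definition T3 := [:: [:: 1; 2; 3]; [:: 3; 2; 1]].
Definition fine := avoids_all T3.

Ltac rw_lt := repeat match goal with H : is_true (?a < ?b) |- _ =>
   rewrite ?H ?(leq_gtF (ltnW H)); clear H end.
Ltac finesolve := rewrite /fine /T3 /avoids_all /contains /order_iso /=; rw_lt; rewrite ?ltnn.

Lemma fine2 a b : fine [:: a; b].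
Proof. by []. Qed.
Lemma fine_cmd c m d : m < c -> m < d -> fine [:: c; m; d].
Proof. move=> *. finesolve. case: (ltngtP c d) => // *; rw_lt; by rewrite ?ltnn. Qed.
Lemma fine_cnm c n m : c < n -> m < n -> fine [:: c; n; m].
Proof. move=> *. finesolve. case: (ltngtP c m) => // *; rw_lt; by rewrite ?ltnn. Qed.
Lemma fine_cnmd c n m d : m < c -> c < n -> m < d -> d < n -> fine [:: c; n; m; d].
Proof. move=> h1 h2 h3 h4. have h5 := ltn_trans h1 h2. finesolve.
case: (ltngtP c d) => // *; rw_lt; by rewrite ?ltnn. Qed.
Lemma fine_F3 c m d1 d2 : m < c -> c < d1 -> m < d2 -> d2 < d1 -> fine [:: c; m; d1; d2].
Proof. move=> h1 h2 h3 h4. have h5 := ltn_trans h1 h2. finesolve.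
case: (ltngtP c d2) => // *; rw_lt; by rewrite ?ltnn. Qed.
Lemma nf321 a b c : c < b -> b < a -> ~~ fine [:: a; b; c].
Proof. move=> h1 h2. have h3 := ltn_trans h1 h2. by finesolve. Qed.
Lemma nf123 a b c : a < b -> b < c -> ~~ fine [:: a; b; c].
Proof. move=> h1 h2. have h3 := ltn_trans h1 h2. by finesolve. Qed.
Lemma nf_n3 n u t d : u < n -> t < n -> d < n -> u != t -> t != d -> u != d ->
  ~~ fine [:: n; u; t; d].
Proof.
move=> h1 h2 h3 h4 h5 h6.
case: (ltngtP u t) h4 => // h7 _; case: (ltngtP t d) h5 => // h8 _;
  case: (ltngtP u d) h6 => // h9 _; by finesolve.
Qed.

Lemma fine_sub w s : subseq s w -> fine w -> fine s.
Proof. exact: avoids_sub. Qed.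

Lemma sub_cat2 (b c : nat) l1 l2 : b \in l1 -> c \in l2 -> subseq [:: b; c] (l1 ++ l2).
Proof.
move=> Hb Hc; rewrite -[[:: b; c]]/([:: b] ++ [:: c]).
by apply: cat_subseq; rewrite sub1seq.
Qed.

Lemma sub_cat3 (b c a : nat) l1 l2 l3 : b \in l1 -> c \in l2 -> a \in l3 ->
  subseq [:: b; c; a] (l1 ++ l2 ++ l3).
Proof.
move=> Hb Hc Ha; rewrite -[[:: b; c; a]]/([:: b] ++ [:: c; a]).
apply: cat_subseq; first by rewrite sub1seq.
exact: sub_cat2.
Qed.

Lemma min_shape m D : fine (m :: D) -> (forall d, d \in D -> m < d) -> uniq D ->
  D = [::] \/ (exists d0, D = [:: d0]) \/ (exists d1 d2, D = [:: d1; d2] /\ d2 < d1).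
Proof.
case: D => [|d1 [|d2 D]] Hf Hm Hu; first by left.
- by right; left; exists d1.
have h1 : m < d1 by apply: Hm; rewrite mem_head.
have h2 : m < d2 by apply: Hm; rewrite !inE eqxx orbT.
case: (ltngtP d1 d2) => h12.
- have := fine_sub (mask_subseq [:: true; true; true] _) Hf.
  by rewrite /= (negPf (nf123 h1 h12)).
- case: D Hf Hm Hu => [|d3 D] Hf Hm Hu; first by right; right; exists d1, d2.
  have h3 : m < d3 by apply: Hm; rewrite !inE eqxx !orbT.
  case: (ltngtP d2 d3) => h23.
  + have := fine_sub (mask_subseq [:: true; false; true; true] _) Hf.
    by rewrite /= (negPf (nf123 h2 h23)).
  + have := fine_sub (mask_subseq [:: false; true; true; true] _) Hf.
    by rewrite /= (negPf (nf321 h23 h12)).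
  + by move: Hu; rewrite h23 => /= /andP [_ /andP [/negP []]]; rewrite mem_head.
- by move: Hu; rewrite h12 => /= /andP [/negP []]; rewrite mem_head.
Qed.

Lemma perm_iota_facts n y : perm_eq y (iota 1 n) ->
  [/\ uniq y, size y = n & forall c, c \in y -> 0 < c <= n].
Proof.
move=> Hp; split.
- by rewrite (perm_uniq Hp) iota_uniq.
- by rewrite (perm_size Hp) size_iota.
- by move=> c; rewrite (perm_mem Hp) mem_iota; lia.
Qed.

Lemma uniq_catN (b : nat) l1 l2 : uniq (l1 ++ l2) -> b \in l1 -> b \notin l2.
Proof.
rewrite cat_uniq => /and3P [_ /hasPn H _] Hb; apply/negP => /H.
by rewrite Hb.
Qed.

Lemma end_wit n y Y Z m : 5 <= n -> perm_eq y (iota 1 n) -> y = Y ++ n :: m :: Z ->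
  0 < m <= 2 -> size Z <= 1 -> has231 y.
Proof.
move=> Hn Hp Ey Hm HZ.
have [Uy Sy My] := perm_iota_facts Hp.
have HY : exists2 b, b \in Y & b != 1.
  case: Y Ey => [|y1 [|y2 Y]] Ey; try by move: Sy; rewrite Ey /=; lia.
  case: (eqVneq y1 1) => [E1|N1]; last by exists y1; rewrite ?mem_head.
  exists y2; first by rewrite !inE eqxx orbT.
  apply/negP => /eqP E2; move: Uy; rewrite Ey E1 E2 /=; by [].
case: HY => b Hb Nb.
have Hby : b \in y by rewrite Ey mem_cat Hb.
have := My b Hby.
have : b \notin [:: n, m & Z] by apply: uniq_catN Hb; rewrite -Ey.
rewrite !inE !negb_or => /and3P [/eqP Nn /eqP Nm _] Hb1.
exists m, b, n; split; try by move: Nb => /eqP ?; lia.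
by rewrite Ey; apply: (@sub_cat3 b n m Y [:: n] (m :: Z)); rewrite ?mem_head.
Qed.

Lemma wit2 n y W V d0 : 5 <= n -> perm_eq y (iota 1 n) ->
  y = W ++ n :: 2 :: V ++ [:: 1; d0] -> has231 y.
Proof.
move=> Hn Hp Ey.
have [Uy Sy My] := perm_iota_facts Hp.
have [e He] : exists e, e \in W ++ V.
  case: W Ey => [|e W] Ey; last by exists e; rewrite mem_head.
  case: V Ey => [|e V] Ey; last by exists e; rewrite mem_head.
  by move: Sy; rewrite Ey /=; lia.
have Hey : e \in y.
  rewrite Ey mem_cat; move: He; rewrite mem_cat => /orP [->//|HeV].
  by rewrite /= !inE mem_cat HeV !orbT.
have := My e Hey.
have Hne : [/\ e != n, e != 2 & e != 1].
  have Uy' := Uy; rewrite Ey in Uy'.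
  move: He; rewrite mem_cat => /orP [HeW|HeV].
  - have := uniq_catN Uy' HeW.
    by rewrite !inE !mem_cat !inE !negb_or => /and3P [-> -> /andP [_ /andP [-> _]]].
  - move: Uy'; rewrite cat_uniq => /and3P [_ _ /= /andP [Hn1 /andP [H2 Hu3]]].
    have := uniq_catN Hu3 HeV; rewrite !inE negb_or => /andP [-> _].
    split => //.
    + by apply/negP => /eqP E; move: Hn1; rewrite -E !inE mem_cat HeV orbT.
    + by apply/negP => /eqP E; move: H2; rewrite -E mem_cat HeV.
case: Hne => /eqP N1 /eqP N2 /eqP N3 He1.
move: He; rewrite mem_cat => /orP [HeW|HeV].
- exists 2, e, n; split; try lia.
  by rewrite Ey; apply: (@sub_cat3 e n 2 W [:: n] (2 :: V ++ [:: 1; d0])); rewrite ?mem_head.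
- exists 1, 2, e; split; try lia.
  rewrite Ey; apply: (subseq_trans _ (suffix_subseq W _)).
  apply: (subseq_trans _ (subseq_cons _ n)).
  rewrite /= ?eqxx.
  by apply: (@sub_cat2 e 1 V [:: 1; d0]); rewrite ?mem_head.
Qed.

Lemma my_last_eq (l1 l2 : seq nat) a b : l1 ++ [:: a] = rcons l2 b -> a = b.
Proof. by move=> E; have := congr1 (last 0) E; rewrite last_cat last_rcons. Qed.

Lemma sub_ctd (c t d : nat) P2 : subseq [:: c; t; d] (c :: rcons P2 t ++ [:: d]).
Proof.
rewrite /= eqxx; apply: (@sub_cat2 t d (rcons P2 t) [:: d]); last exact: mem_head.
by rewrite mem_rcons mem_head.
Qed.

Lemma inv3 inp m d1 d2 : m < d2 -> d2 < d1 ->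
  (forall c, c \in inp -> m < c /\ c != d1) ->
  forall stk out, ((exists T, stk = T ++ [:: m; d1; d2]) \/
                   (exists T, stk = T ++ [:: d2] /\ d1 \in out)) ->
  (exists T, (run T3 inp stk out).1 = T ++ [:: m; d1; d2]) \/
  (exists T, (run T3 inp stk out).1 = T ++ [:: d2] /\ d1 \in (run T3 inp stk out).2).
Proof.
move=> h1 h2; elim: inp => [|c inp IH] Hc stk out Hs; first by [].
have Hc' : forall c', c' \in inp -> m < c' /\ c' != d1.
  by move=> c' H; apply: Hc; rewrite inE H orbT.
have [hc hcd] := Hc c (mem_head _ _).
rewrite run_cons; apply: IH => //.
case: Hs => [[T ET]|[T [ET Hd]]].
- case: (ltngtP c d1) => hcd1.
  + have [P1 [P2 [E1 E2 _]]] := @PS_suf T3 c T [:: m; d1; d2] out (fine_F3 hc hcd1 h1 h2).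
    by rewrite ET E2 /=; left; exists (c :: P2).
  + have ET' : stk = (T ++ [:: m; d1]) ++ [:: d2] by rewrite ET -catA.
    have [P1 [P2 [E1 E2 Ef]]] := @PS_suf T3 c (T ++ [:: m; d1]) [:: d2] out (fine2 c d2).
    rewrite ET' E2 /=.
    case/lastP: P2 E1 E2 Ef => [|P2' t] E1 E2 Ef.
    * right; exists [:: c]; split => //.
      by rewrite cats0 in E1; rewrite -E1 !mem_cat !inE eqxx !orbT.
    * exfalso.
      have Et : d1 = t by apply: (@my_last_eq (T ++ [:: m]) (P1 ++ P2')); rewrite -catA /= E1 rcons_cat.
      have := fine_sub (sub_ctd c t d2 P2') Ef.
      by rewrite -Et (negPf (nf321 h2 hcd1)).
  + by move: hcd; rewrite hcd1 eqxx.
- have [P1 [P2 [E1 E2 _]]] := @PS_suf T3 c T [:: d2] out (fine2 c d2).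
  rewrite ET E2 /=; right; exists (c :: P2); split => //.
  by rewrite mem_cat Hd.
Qed.


Lemma uniq_catN2 (b : nat) l1 l2 : uniq (l1 ++ l2) -> b \in l2 -> b \notin l1.
Proof. by move=> U H; apply/negP => H1; move: (uniq_catN U H1); rewrite H. Qed.

Lemma stP pre : perm_eq ((run T3 pre [::] [::]).2 ++ (run T3 pre [::] [::]).1) pre.
Proof. by have [H _] := run_perm T3 pre [::] [::]. Qed.

Lemma st_push pre a : run T3 (pre ++ [:: a]) [::] [::] =
  push_step T3 a (run T3 pre [::] [::]).1 (run T3 pre [::] [::]).2.
Proof. by rewrite run_cat /=; case: push_step. Qed.

Lemma sub_ctd' (c t d : nat) P2 L : d \in L -> subseq [:: c; t; d] (c :: rcons P2 t ++ L).
Proof.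
move=> Hd; rewrite /= eqxx; apply: (@sub_cat2 t d (rcons P2 t) L) => //.
by rewrite mem_rcons mem_head.
Qed.

Lemma sub_utd (P : seq nat) u t L : subseq [:: u, t & L] (rcons (rcons P u) t ++ L).
Proof. by rewrite -!cats1 -!catA /=; exact: suffix_subseq. Qed.

Lemma wit_sub y w (a b c : nat) : a < b -> b < c -> subseq [:: b; c; a] w -> subseq w y -> has231 y.
Proof. by move=> h1 h2 h3 h4; exists a, b, c; split => //; apply: subseq_trans h4. Qed.

Lemma key_lemma n A1 A2 B m : 5 <= n -> perm_eq (A1 ++ m :: A2 ++ n :: B) (iota 1 n) ->
  (m = 1 \/ (m = 2 /\ 1 \in B)) -> has231 (sT T3 (A1 ++ m :: A2 ++ n :: B)).
Proof.
move=> Hn Hp Hm.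
set preA := A1 ++ m :: A2.
have Ex : A1 ++ m :: A2 ++ n :: B = (preA ++ [:: n]) ++ B by rewrite -!catA.
rewrite Ex in Hp *.
have [Ux Sx Mx] := perm_iota_facts Hp.
have Hm12 : 0 < m <= 2 by case: Hm => [->|[-> _]].
have hmn : m < n by lia.
have UA : uniq (preA ++ n :: B) by rewrite -cat1s catA.
have HnA : n \notin preA by apply: (uniq_catN2 UA); rewrite mem_head.
have Hmx : forall c, c \in preA ++ n :: B -> 0 < c <= n.
  by move=> c Hc; apply: Mx; rewrite -catA.
have H1A : m = 2 -> 1 \notin preA.
  move=> E2; case: Hm => [E1|[_ H1]]; first by rewrite E1 in E2.
  by apply: (uniq_catN2 UA); rewrite inE H1 orbT.
have HA : forall c, c \in preA -> c < n /\ (c != m -> m < c).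
  move=> c Hc; have := Hmx c; rewrite mem_cat Hc => /(_ isT) Hc1.
  have Hcn : c != n by apply/negP => /eqP E; move: HnA; rewrite -E Hc.
  split; first by move: Hcn => /eqP; lia.
  move=> /eqP Hcm; case: Hm => [E1|[E2 _]]; first by lia.
  have Hc1' : c != 1 by apply/negP => /eqP E; move: (H1A E2); rewrite -E Hc.
  by move: Hc1' => /eqP; lia.
have HB : forall c, c \in B -> [/\ c < n, c \notin preA & (c != 1 -> m < c)].
  move=> c Hc.
  have Hc1 : 0 < c <= n by apply: Hmx; rewrite mem_cat inE Hc !orbT.
  have HcA : c \notin preA by apply: (uniq_catN2 UA); rewrite inE Hc orbT.
  have Hcn : c != n.
    by apply/negP => /eqP E; move: UA; rewrite cat_uniq => /and3P [_ _ /= /andP [+ _]]; rewrite -E Hc.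
  have HmA : m \in preA by rewrite mem_cat mem_head orbT.
  have Hcm : c != m by apply/negP => /eqP E; move: HcA; rewrite E HmA.
  split => //; first by move: Hcn => /eqP; lia.
  by move: Hcm => /eqP Hcm /eqP; lia.
have HBn : forall c, c \in B -> c < n by move=> c /HB [].
have UpreA : uniq preA by move: UA; rewrite cat_uniq => /andP [].
have [P [D [E1 E2 E3]]] := PS1 T3 m (run T3 A1 [::] [::]).1 (run T3 A1 [::] [::]).2.
have UA1 : uniq A1 by move: UpreA; rewrite cat_uniq => /andP [].
have HmA1 : m \notin A1 by apply: (uniq_catN2 UpreA); rewrite mem_head.
have HDA1 : forall d, d \in D -> d \in A1.
  move=> d Hd; rewrite -(perm_mem (stP A1)) mem_cat E1 mem_cat Hd !orbT //.
have HD : forall d, d \in D -> m < d /\ d < n.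
  move=> d Hd; have HdA : d \in preA by rewrite mem_cat HDA1.
  have [h1 h2] := HA d HdA; split => //; apply: h2.
  by apply/negP => /eqP E; move: HmA1; rewrite -E HDA1.
have UD : uniq D.
  have := stP A1; move/perm_uniq; rewrite UA1 cat_uniq E1 => /and3P [_ _].
  by rewrite cat_uniq => /and3P [].
have Est1 : run T3 (A1 ++ [:: m]) [::] [::] = (m :: D, (run T3 A1 [::] [::]).2 ++ P).
  by rewrite st_push E2.
set o1 := (run T3 A1 [::] [::]).2 ++ P in Est1.
have EpreA : run T3 preA [::] [::] = run T3 A2 (m :: D) o1.
  by rewrite /preA -cat1s catA run_cat Est1.
have Ey : sT T3 ((preA ++ [:: n]) ++ B) =
   (run T3 B (run T3 (preA ++ [:: n]) [::] [::]).1 (run T3 (preA ++ [:: n]) [::] [::]).2).2 ++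
   (run T3 B (run T3 (preA ++ [:: n]) [::] [::]).1 (run T3 (preA ++ [:: n]) [::] [::]).2).1.
  by rewrite /sT stack_run_run run_cat.
have Hpy : perm_eq (sT T3 ((preA ++ [:: n]) ++ B)) (iota 1 n).
  by apply: perm_trans Hp; rewrite /sT stack_run_run; exact: stP.
have Hsub : subseq ((run T3 (preA ++ [:: n]) [::] [::]).2 ++ (run T3 (preA ++ [:: n]) [::] [::]).1)
                   (sT T3 ((preA ++ [:: n]) ++ B)) by rewrite Ey; apply: run_subseq.
have HS2 : forall t, t \in (run T3 preA [::] [::]).1 -> t < n /\ (t != m -> m < t).
  by move=> t Ht; apply: HA; rewrite -(perm_mem (stP preA)) mem_cat Ht orbT.
have US2 : uniq ((run T3 preA [::] [::]).2 ++ (run T3 preA [::] [::]).1).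
  by rewrite (perm_uniq (stP preA)).
have Hshape : D = [::] \/ (exists d0, D = [:: d0]) \/ (exists d1 d2, D = [:: d1; d2] /\ d2 < d1).
  case: E3 => [Hf|->]; last by left.
  by apply: (@min_shape m D Hf) => // d Hd; case: (HD d Hd).
case: Hshape => [ED|[[d0 ED]|[d1 [d2 [ED hd]]]]].
-
  have [T1 [Z1 EA2]] := @run_suf T3 A2 [::] [:: m] o1 (fun c _ => fine2 c m).
  rewrite ED in EpreA; rewrite cat0s -EpreA in EA2.
  move: HS2 US2; rewrite EA2 /= => HS2 US2.
  have [P1 [P2 [E1' E2' Ef]]] := @PS_suf T3 n T1 [:: m] (o1 ++ Z1) (fine2 n m).
  have Est : run T3 (preA ++ [:: n]) [::] [::] = (n :: P2 ++ [:: m], (o1 ++ Z1) ++ P1).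
    by rewrite st_push EA2.
  case/lastP: P2 E1' E2' Ef Est => [|P2' t] E1' E2' Ef Est.
  + rewrite Est /= in Ey.
    have [T2 [Z2 EB]] := @run_suf T3 B [::] [:: n; m] ((o1 ++ Z1) ++ P1)
      (fun c Hc => fine_cnm (HBn c Hc) hmn).
    rewrite cat0s in EB; rewrite EB /= in Ey.
    apply: (@end_wit n _ ((((o1 ++ Z1) ++ P1) ++ Z2) ++ T2) [::] m Hn Hpy) => //.
    by rewrite Ey catA.
  + exfalso.
    have Ht : t \in T1 by rewrite E1' mem_cat mem_rcons mem_head orbT.
    have [htn htm] : t < n /\ (t != m -> m < t) by apply: HS2; rewrite mem_cat Ht.
    have htm' : t != m.
      apply/negP => /eqP E; move: US2; rewrite cat_uniq => /and3P [_ _].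
      by rewrite cat_uniq => /and3P [_ /hasPn /(_ m (mem_head _ _))]; rewrite -E Ht.
    have := fine_sub (sub_ctd n t m P2') Ef.
    by rewrite (negPf (nf321 (htm htm') htn)).
-
  have [hmd0 hd0n] : m < d0 /\ d0 < n by apply: HD; rewrite ED mem_head.
  have h1d0 : 1 < d0 by clear -hmd0 Hm12; lia.
  have HA2 : forall c, c \in A2 -> m < c.
    move=> c Hc; have HcA : c \in preA by rewrite mem_cat inE Hc !orbT.
    apply: (proj2 (HA c HcA)); apply/negP => /eqP E.
    by move: UpreA; rewrite cat_uniq => /and3P [_ _ /= /andP [+ _]]; rewrite -E Hc.
  have [T1 [Z1 EA2]] := @run_suf T3 A2 [::] [:: m; d0] o1
     (fun c Hc => fine_cmd (HA2 c Hc) hmd0).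
  rewrite ED in EpreA; rewrite cat0s -EpreA in EA2.
  move: HS2 US2; rewrite EA2 /= => HS2 US2.
  have [P1 [P2 [E1' E2' Ef]]] := @PS_suf T3 n T1 [:: m; d0] (o1 ++ Z1) (fine_cmd hmn hmd0).
  have Est : run T3 (preA ++ [:: n]) [::] [::] = (n :: P2 ++ [:: m; d0], (o1 ++ Z1) ++ P1).
    by rewrite st_push EA2.
  case/lastP: P2 E1' E2' Ef Est => [|P2' t] E1' E2' Ef Est; last first.
  + exfalso.
    have Ht : t \in T1 by rewrite E1' mem_cat mem_rcons mem_head orbT.
    have [htn htm] : t < n /\ (t != m -> m < t) by apply: HS2; rewrite mem_cat Ht.
    have htm' : t != m.
      apply/negP => /eqP E; move: US2; rewrite cat_uniq => /and3P [_ _].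
      by rewrite cat_uniq => /and3P [_ /hasPn /(_ m (mem_head _ _))]; rewrite -E Ht.
    have := fine_sub (@sub_ctd' n t m P2' [:: m; d0] (mem_head _ _)) Ef.
    by rewrite (negPf (nf321 (htm htm') htn)).
  rewrite Est /= in Ey.
  set O := (o1 ++ Z1) ++ P1 in Ey.
  have UB : uniq B by move: UA; rewrite cat_uniq => /and3P [_ _ /= /andP [_ ->]].
  case: Hm => [E1m|[E2m H1B]].
  + have HBm : forall c, c \in B -> m < c.
      move=> c Hc; have [_ HcA Hc1] := HB c Hc; apply: Hc1.
      apply/negP => /eqP E; move: HcA; rewrite E -E1m mem_cat mem_head orbT.
      by [].
    have [T2 [Z2 EB]] := @run_suf T3 B [::] [:: n; m; d0] O
      (fun c Hc => fine_cnmd (HBm c Hc) (HBn c Hc) hmd0 hd0n).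
    rewrite cat0s in EB; rewrite EB /= in Ey.
    apply: (@end_wit n _ ((O ++ Z2) ++ T2) [:: d0] m Hn Hpy) => //.
    by rewrite Ey catA.
  + have [B1 [B2 EB]] : exists B1 B2, B = B1 ++ 1 :: B2.
      by case/splitPr: H1B => B1 B2; exists B1, B2.
    have H1B1 : 1 \notin B1 by apply: (uniq_catN2 (l2 := 1 :: B2)); rewrite -?EB ?mem_head.
    have H1B2 : 1 \notin B2.
      by move: UB; rewrite EB cat_uniq => /and3P [_ _ /= /andP []].
    have HB1 : forall c, c \in B1 -> m < c.
      move=> c Hc; have [_ _ Hc1] : [/\ c < n, c \notin preA & (c != 1 -> m < c)].
        by apply: HB; rewrite EB mem_cat Hc.
      by apply: Hc1; apply/negP => /eqP E; move: H1B1; rewrite -E Hc.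
    have HB2 : forall c, c \in B2 -> 1 < c.
      move=> c Hc; have [_ _ Hc1] : [/\ c < n, c \notin preA & (c != 1 -> m < c)].
        by apply: HB; rewrite EB mem_cat inE Hc !orbT.
      have : c != 1 by apply/negP => /eqP E; move: H1B2; rewrite -E Hc.
      move/Hc1 => hc; apply: leq_ltn_trans hc; by case/andP: Hm12.
    have HB1n : forall c, c \in B1 -> c < n.
      by move=> c Hc; apply: HBn; rewrite EB mem_cat Hc.
    have [T2 [Z2 EB1]] := @run_suf T3 B1 [::] [:: n; m; d0] O
      (fun c Hc => fine_cnmd (HB1 c Hc) (HB1n c Hc) hmd0 hd0n).
    rewrite cat0s in EB1.
    rewrite EB run_cat EB1 /= in Ey.
    have Est2 : T2 ++ [:: n; m; d0] = (T2 ++ [:: n; m]) ++ [:: d0] by rewrite -catA.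
    have [P3 [P4 [E3' E4' Ef']]] := @PS_suf T3 1 (T2 ++ [:: n; m]) [:: d0] (O ++ Z2) (fine2 1 d0).
    rewrite Est2 E4' /= in Ey.
    case/lastP: P4 E3' E4' Ef' Ey => [|P4' t] E3' E4' Ef' Ey; last first.
    * exfalso.
      have Et : m = t.
        by apply: (@my_last_eq (T2 ++ [:: n]) (P3 ++ P4')); rewrite -catA /= E3' rcons_cat.
      have := fine_sub (sub_ctd 1 t d0 P4') Ef'.
      by rewrite -Et E2m (negPf (@nf123 1 2 d0 _ _)) //; rewrite -E2m.
    have [T4 [Z3 EB2]] := @run_suf T3 B2 [::] [:: 1; d0] ((O ++ Z2) ++ P3)
      (fun c Hc => fine_cmd (HB2 c Hc) h1d0).
    rewrite cat0s in EB2; rewrite EB2 in Ey.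
    rewrite cats0 in E3'; rewrite EB in Hpy *.
    apply: (@wit2 n _ ((O ++ Z2) ++ T2) (Z3 ++ T4) d0 Hn Hpy).
    by rewrite Ey -E3' -E2m -!catA.
-
  have [hmd1 hd1n] : m < d1 /\ d1 < n by apply: HD; rewrite ED mem_head.
  have [hmd2 hd2n] : m < d2 /\ d2 < n by apply: HD; rewrite ED !inE eqxx orbT.
  have Hd1A1 : d1 \in A1 by apply: HDA1; rewrite ED mem_head.
  have HA2 : forall c, c \in A2 -> m < c /\ c != d1.
    move=> c Hc; have HcA : c \in preA by rewrite mem_cat inE Hc !orbT.
    have HcA1 : c \notin A1 by apply: (uniq_catN2 UpreA); rewrite inE Hc orbT.
    split; last by apply/negP => /eqP E; move: HcA1; rewrite E Hd1A1.
    apply: (proj2 (HA c HcA)); apply/negP => /eqP E.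
    by move: UpreA; rewrite cat_uniq => /and3P [_ _ /= /andP [+ _]]; rewrite -E Hc.
  have Hinv := @inv3 A2 m d1 d2 hmd2 hd HA2 (m :: D) o1.
  have {Hinv} Hinv := Hinv (or_introl (ex_intro _ [::] (_ : m :: D = [::] ++ [:: m; d1; d2]))).
  have {Hinv} Hinv := Hinv ltac:(by rewrite ED).
  rewrite -EpreA in Hinv.
  move: Hsub; rewrite st_push => Hsub.
  case: Hinv => [[T ET]|[T [ET Hd1]]].
  + have ET' : (run T3 preA [::] [::]).1 = (T ++ [:: m; d1]) ++ [:: d2] by rewrite ET -catA.
    have [P1 [P2 [E1' E2' Ef]]] := @PS_suf T3 n (T ++ [:: m; d1]) [:: d2]
       (run T3 preA [::] [::]).2 (fine2 n d2).
    rewrite ET' E2' in Hsub.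
    case/lastP: P2 E1' E2' Ef Hsub => [|P2' t] E1' E2' Ef Hsub.
    * apply: (wit_sub (a := d2) (b := d1) (c := n) hd hd1n _ Hsub).
      apply: (@sub_cat3 d1 n d2 _ [:: n] _); rewrite ?mem_head //.
      by rewrite cats0 in E1'; rewrite mem_cat -E1' !mem_cat !inE eqxx !orbT.
    * exfalso.
      have Et : d1 = t.
        by apply: (@my_last_eq (T ++ [:: m]) (P1 ++ P2')); rewrite -catA /= E1' rcons_cat.
      have := fine_sub (sub_ctd n t d2 P2') Ef.
      by rewrite -Et (negPf (nf321 hd hd1n)).
  + have [P1 [P2 [E1' E2' Ef]]] := @PS_suf T3 n T [:: d2]
       (run T3 preA [::] [::]).2 (fine2 n d2).
    rewrite ET E2' in Hsub.
    have US2' : uniq (T ++ [:: d2]).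
      by move: US2; rewrite ET cat_uniq => /and3P [_ _].
    case/lastP: P2 E1' E2' Ef Hsub => [|P2' t] E1' E2' Ef Hsub.
    * apply: (wit_sub (a := d2) (b := d1) (c := n) hd hd1n _ Hsub).
      apply: (@sub_cat3 d1 n d2 _ [:: n] _); rewrite ?mem_head //.
      by rewrite mem_cat Hd1.
    * have Ht : t \in T by rewrite E1' mem_cat mem_rcons mem_head orbT.
      have htn : t < n by apply: (proj1 (HS2 t _)); rewrite ET mem_cat Ht.
      case/lastP: P2' E1' E2' Ef Hsub => [|P2'' u] E1' E2' Ef Hsub.
      - have htd2 : t != d2 by have := uniq_catN US2' Ht; rewrite inE.
        have ht2 : t < d2.
          case: (ltngtP t d2) htd2 => // h _.
          have := fine_sub (sub_ctd n t d2 [::]) Ef.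
          by rewrite (negPf (nf321 h htn)).
        apply: (wit_sub (a := t) (b := d1) (c := n) (ltn_trans ht2 hd) hd1n _ Hsub).
        apply: (@sub_cat3 d1 n t _ [:: n] _); rewrite ?mem_head //.
        by rewrite mem_cat Hd1.

      - exfalso.
        have Hu : u \in T by rewrite E1' mem_cat mem_rcons inE mem_rcons mem_head !orbT.
        have hun : u < n by apply: (proj1 (HS2 u _)); rewrite ET mem_cat Hu.
        have Uutd : uniq [:: u; t; d2].
          apply: (subseq_uniq _ US2'); rewrite E1' -catA.
          apply: subseq_trans (sub_utd P2'' u t [:: d2]) (suffix_subseq _ _).
        move: Uutd; rewrite /= !inE !negb_or => /andP [/andP [hut hud] /andP [htd _]].
        have := fine_sub (_ : subseq [:: n; u; t; d2] _) Ef.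
        rewrite (negPf (nf_n3 hun htn hd2n hut htd hud)) //.
        by rewrite /= eqxx => H; have := H (sub_utd P2'' u t [:: d2]).
Qed.

Unset Implicit Arguments.

Theorem lemma4p4 (n : nat) (x : seq nat) :
  5 <= n -> in_Sort n [:: 1; 2; 3] [:: 3; 2; 1] x ->
  ind x n < minn (ind x 1) (ind x 2).
Proof.
move=> Hn [Hp Hw]; rewrite /is_perm in Hp.
have [Ux Sx Mx] := perm_iota_facts Hp.
have Hmem : forall c, 0 < c <= n -> c \in x.
  by move=> c Hc; rewrite (perm_mem Hp) mem_iota; lia.
have Hpy : perm_eq (s_pair [:: 1; 2; 3] [:: 3; 2; 1] x) (iota 1 n).
  apply: perm_trans Hp; rewrite /s_pair /sT stack_run_run; exact: (stP x).
have [Uy _ _] := perm_iota_facts Hpy.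
have [A [B Ex]] : exists A B, x = A ++ n :: B.
  have : n \in x by apply: Hmem; lia.
  by case/splitPr => A B; exists A, B.
subst x.
have Hc : forall m A1 A2, A = A1 ++ m :: A2 -> (m = 1 \/ (m = 2 /\ 1 \in B)) -> False.
  move=> m A1 A2 EA Hm.
  have Hp' : perm_eq (A1 ++ m :: A2 ++ n :: B) (iota 1 n) by rewrite -cat_cons catA -EA.
  have := key_lemma Hn Hp' Hm.
  rewrite -cat_cons catA -EA.
  exact: (west_231 Uy Hw).
have HnA : n \notin A by apply: (uniq_catN2 Ux); rewrite mem_head.
have HnB : n \notin B by move: Ux; rewrite cat_uniq => /and3P [_ _ /= /andP []].
have Hin : forall c, 0 < c < n -> (c \in A) || (c \in B).
  move=> c Hc1; have : c \in A ++ n :: B by apply: Hmem; lia.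
  by rewrite mem_cat inE; case/orP => [->//|/orP [/eqP E|->]]; [lia | rewrite orbT].
have Hidx : forall c, c \in B -> ind (A ++ n :: B) n < ind (A ++ n :: B) c.
  move=> c HcB.
  have HcA : c \notin A by apply: (uniq_catN2 Ux); rewrite inE HcB orbT.
  have Hcn : c != n by apply/negP => /eqP E; move: HnB; rewrite -E HcB.
  rewrite /ind !index_cat (negPf HnA) (negPf HcA) /= eqxx.
  by rewrite eq_sym (negPf Hcn); lia.
case/orP: (Hin 1 (ltac:(lia))) => H1.
- by case/splitPr: H1 Hc => A1 A2 Hc; case: (Hc 1 A1 A2 erefl (or_introl erefl)).
case/orP: (Hin 2 (ltac:(lia))) => H2.
- by case/splitPr: H2 Hc => A1 A2 Hc; case: (Hc 2 A1 A2 erefl (or_intror (conj erefl H1))).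
by rewrite leq_min !Hidx.
Qed.
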